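(* Let $0<s_1<s_2<1$, $2s_1<d<\frac{2s_1s_2}{s_2-s_1}$, $a>0$, and suppose $g$ satisfies $(G_1)$–$(G_3)$. Then $I$ restricted to $\mathcal{P}_{\infty,a}$ is coercive: $I(u)\to+\infty$ as $\|u\|\to\infty$ with $u\in\mathcal{P}_{\infty,a}$.
   Context: For $s\in(0,1)$, $|\nabla_s u|_2^2=\int_{\mathbb{R}^d\times\mathbb{R}^d}\frac{|u(x)-u(y)|^2}{|x-y|^{d+2s}}dx\,dy$; $|\cdot|_p$ is the $L^p(\mathbb{R}^d)$ norm; $H^{s_1,s_2}(\mathbb{R}^d)=\{u\in L^2(\mathbb{R}^d):|\nabla_{s_1}u|_2<\infty,\ |\nabla_{s_2}u|_2<\infty\}$ with norm $\|u\|^2=|\nabla_{s_1}u|_2^2+|\nabla_{s_2}u|_2^2+|u|_2^2$. $S_a=\{u\in H^{s_1,s_2}(\mathbb{R}^d):|u|_2^2=a\}$. $g:\mathbb{R}\to\mathbb{R}$, $G(s)=\int_0^sg$, $\widetilde G(s)=\frac12g(s)s-G(s)$. $(G_1)$: $g$ continuous, odd. $(G_2)$: there exist $\alpha,\beta$ with $2+\frac{4s_2}{d}<\alpha<\beta<\frac{2d}{d-2s_1}$ and $\alpha G(s)\le g(s)s\le\beta G(s)$ for all $s$. $(G_3)$: $\widetilde G'$ exists and $\widetilde G'(s)s\ge\alpha\widetilde G(s)$ for all $s$. $I(u)=\frac12|\nabla_{s_1}u|_2^2+\frac12|\nabla_{s_2}u|_2^2-\int_{\mathbb{R}^d}G(u)dx$;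 $P_\infty(u)=s_1|\nabla_{s_1}u|_2^2+s_2|\nabla_{s_2}u|_2^2-d\int_{\mathbb{R}^d}\widetilde G(u)dx$; $\mathcal{P}_{\infty,a}=\{u\in S_a:P_\infty(u)=0\}$. *)

(* Defs.v *)
From HB Require Import structures.
From mathcomp Require Import all_boot all_order all_algebra.
From mathcomp Require Import all_classical all_reals all_analysis.
Set Implicit Arguments. Unset Strict Implicit. Unset Printing Implicit Defensive.
Import Order.TTheory GRing.Theory Num.Theory.
Import numFieldNormedType.Exports.
Local Open Scope classical_set_scope.
Local Open Scope ring_scope.

Section Defs.
Variable R : realType.

(* Lebesgue integral over R^d = 'rV[R]_d, defined as the iterated
   one-dimensional Lebesgue integral over the coordinates (for the
   nonnegative Borel integrands used below this coincides, by Tonelli,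
   with the integral w.r.t. d-dimensional Lebesgue measure). *)
Fixpoint intRd (n : nat) : ('rV[R]_n -> \bar R) -> \bar R :=
  match n with
  | 0 => fun f => f 0
  | n'.+1 => fun f =>
      (\int[@lebesgue_measure R]_x
          intRd (fun v : 'rV[R]_n' => f (row_mx (const_mx x : 'rV[R]_1) v)))%E
  end.

Definition enorm (d : nat) (v : 'rV[R]_d) : R := Num.sqrt (\sum_i v 0 i ^+ 2).

Definition borel_Rd (d : nat) (u : 'rV[R]_d -> R) : Prop :=
  forall B : set R, measurable B ->
    (<<s [set A : set 'rV[R]_d | open A] >>) (u @^-1` B).

Definition L2sq (d : nat) (u : 'rV[R]_d -> R) : \bar R :=
  intRd (fun x => ((u x) ^+ 2)%:E).

Definition gagliardo_sq (d : nat) (s : R) (u : 'rV[R]_d -> R) : \bar R :=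
  intRd (fun x => intRd (fun y =>
    ((u x - u y) ^+ 2 / (enorm (x - y) `^ (d%:R + 2 * s)))%:E)).

Definition in_H (d : nat) (s1 s2 : R) (u : 'rV[R]_d -> R) : Prop :=
  [/\ borel_Rd u, (L2sq u < +oo)%E, (gagliardo_sq s1 u < +oo)%E
    & (gagliardo_sq s2 u < +oo)%E].

Definition Hnorm (d : nat) (s1 s2 : R) (u : 'rV[R]_d -> R) : R :=
  Num.sqrt (fine (gagliardo_sq s1 u) + fine (gagliardo_sq s2 u) + fine (L2sq u)).

Definition Gprim (g : R -> R) (s : R) : R :=
  if 0 <= s then Rintegral (@lebesgue_measure R) `[0, s] g
  else - Rintegral (@lebesgue_measure R) `[s, 0] g.

Definition Gtilde (g : R -> R) (s : R) : R := g s * s / 2 - Gprim g s.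

Definition intF (d : nat) (F : R -> R) (u : 'rV[R]_d -> R) : R :=
  fine (intRd (fun x => (F (u x))%:E)).

Definition Ifun (d : nat) (s1 s2 : R) (g : R -> R) (u : 'rV[R]_d -> R) : R :=
  fine (gagliardo_sq s1 u) / 2 + fine (gagliardo_sq s2 u) / 2 - intF (Gprim g) u.

Definition Pinf (d : nat) (s1 s2 : R) (g : R -> R) (u : 'rV[R]_d -> R) : R :=
  s1 * fine (gagliardo_sq s1 u) + s2 * fine (gagliardo_sq s2 u)
  - d%:R * intF (Gtilde g) u.

Definition in_Pinf_a (d : nat) (s1 s2 : R) (g : R -> R) (a : R)
    (u : 'rV[R]_d -> R) : Prop :=
  [/\ in_H s1 s2 u, fine (L2sq u) = a & Pinf s1 s2 g u = 0].

End Defs.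

(* Main.v *)
Require Import Defs.
From HB Require Import structures.
From mathcomp Require Import all_boot all_order all_algebra.
From mathcomp Require Import all_classical all_reals all_analysis.
Import Order.TTheory GRing.Theory Num.Theory.
Import numFieldNormedType.Exports.
Local Open Scope classical_set_scope.
Local Open Scope ring_scope.
Import HBNNSimple.
From mathcomp Require Import ring lra.

Section S.
Context {R : realType}.
Local Open Scope ereal_scope.

Lemma nnint_le dd (T : measurableType dd) (mu : {measure set T -> \bar R}) (f g : T -> \bar R) : (forall x, 0 <= f x) -> (forall x, f x <= g x) ->
  \int[mu]_x f x <= \int[mu]_x g x.
Proof.
move=> f0 fg; rewrite !ge0_integralTE//; last by move=> x; exact: le_trans (f0 x) (fg x).
apply: ge_ereal_sup => _ [h hf <-]; apply: ereal_sup_ubound; exists h => //= x.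
exact: le_trans (hf x) (fg x).
Qed.

Lemma nnint_scale dd (T : measurableType dd) (mu : {measure set T -> \bar R}) (k : R) (f : T -> \bar R) : (0 < k)%R -> (forall x, 0 <= f x) ->
  \int[mu]_x (k%:E * f x) <= k%:E * \int[mu]_x f x.
Proof.
move=> k0 f0; rewrite !ge0_integralTE//; last by move=> x; rewrite mule_ge0// lee_fin ltW.
apply: ge_ereal_sup => _ [h hf <-].
have ki0 : (0 <= k^-1)%R by rewrite invr_ge0 ltW.
pose h' := scale_nnsfun h ki0.
have -> : sintegral mu h = k%:E * sintegral mu h'.
  rewrite (_ : sintegral _ h' = sintegral mu (cst k^-1 \* h)%R) //.
  rewrite sintegralrM muleA -EFinM mulfV ?gt_eqF//; exact: (esym (mul1e _)).
rewrite lee_pmul2l ?lte_fin//.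
apply: ereal_sup_ubound; exists h' => //= x.
have := hf x; have := f0 x; case: (f x) => [r| |] //= r0; last by rewrite leey. rewrite -EFinM !lee_fin => hr. by rewrite ler_pdivrMl. Qed.
End S.

Section T.
Context {R : realType}.
Local Open Scope ereal_scope.

Lemma intRd_ge0 n (f : 'rV[R]_n -> \bar R) : (forall x, 0 <= f x) -> 0 <= intRd f.
Proof.
elim: n f => [|n IH] f f0 /=; first exact: f0.
by apply: integral_ge0 => x _; apply: IH.
Qed.

Lemma intRd_le n (k : R) (f h : 'rV[R]_n -> \bar R) : (0 < k)%R ->
  (forall x, 0 <= f x) -> (forall x, 0 <= h x) -> (forall x, f x <= k%:E * h x) ->
  intRd f <= k%:E * intRd h.
Proof.
move=> k0; elim: n f h => [|n IH] f h f0 h0 fh /=; first exact: fh.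
apply: (le_trans _ (nnint_scale _ _ _ _ _ k0 _)); last by move=> x; apply: intRd_ge0.
apply: nnint_le => x; first by apply: intRd_ge0.
by apply: IH.
Qed.
End T.

Lemma arith (R : realType) (A B x y D s1 s2 k M a : R) :
  0 <= A -> 0 <= B -> 0 < s1 -> s1 < s2 -> 0 < D -> 0 <= k -> x <= k * y ->
  s1 * A + s2 * B - D * y = 0 -> 0 < 1/2 - k * s2 / D ->
  a + `|M| / (1/2 - k * s2 / D) < A + B + a -> M < A/2 + B/2 - x.
Proof.
move=> A0 B0 s10 s12 D0 k0 xy hP c0 hK.
set c := 1/2 - k * s2 / D in c0 hK.
set e := k * s2 / D.
have he : k * s2 = e * D by rewrite /e mulrVK // unitfE gt_eqF.
have hy : D * y = s1 * A + s2 * B by lra.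
have h1 : k * y * D <= k * s2 * (A + B).
  have : 0 <= k * ((s2 - s1) * A) by rewrite mulr_ge0 // mulr_ge0 // subr_ge0 ltW.
  have -> : k * y * D = k * (D * y) by ring.
  rewrite hy; lra.
have h2 : x * D <= e * D * (A + B).
  rewrite -he; apply: le_trans h1; rewrite ler_pM2r //.
have h3 : x <= e * (A + B).
  by rewrite -(ler_pM2r D0); move: h2; rewrite mulrAC.
have h4 : `|M| < c * (A + B).
  by rewrite -ltr_pdivrMl //; lra.
have h5 : M <= `|M| by exact: ler_norm.
have : e = 1/2 - c by rewrite /c /e; lra.
nra.
Qed.

Theorem lemma3p4 (R : realType) (s1 s2 : R) (d : nat) (a : R) (g : R -> R)
    (alpha beta : R) :
  0 < s1 -> s1 < s2 -> s2 < 1 ->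
  2 * s1 < d%:R -> d%:R < 2 * s1 * s2 / (s2 - s1) ->
  0 < a ->
  (* (G1) *)
  continuous g -> (forall s, g (- s) = - g s) ->
  (* (G2) *)
  2 + 4 * s2 / d%:R < alpha -> alpha < beta -> beta < 2 * d%:R / (d%:R - 2 * s1) ->
  (forall s, alpha * Gprim g s <= g s * s /\ g s * s <= beta * Gprim g s) ->
  (* (G3) *)
  (forall s, derivable (Gtilde g) s 1) ->
  (forall s, alpha * Gtilde g s <= derive1 (Gtilde g) s * s) ->
  (* coercivity of I on P_{infty,a} *)
  forall M : R, exists K : R, forall u : 'rV[R]_d -> R,
    in_Pinf_a s1 s2 g a u -> K < Hnorm s1 s2 u -> M < Ifun s1 s2 g u.
Proof.
move=> s10 s12 _ ds1 _ a0 _ _ hal hab _ hG _ _ M.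
set D := d%:R : R.
have D0 : 0 < D by apply: lt_trans ds1; rewrite mulr_gt0.
have q0 : 0 < 4 * s2 / D by rewrite divr_gt0 // mulr_gt0 // (lt_trans s10).
have al2 : 0 < alpha - 2 by lra.
set k := 2 / (alpha - 2).
have k0 : 0 < k by rewrite divr_gt0.
have c0 : 0 < 1/2 - k * s2 / D.
  have -> : k * s2 / D = (4 * s2 / D) / (alpha - 2) / 2.
    by rewrite /k; field; rewrite ?gt_eqF //; lra.
  have : (4 * s2 / D) / (alpha - 2) < 1 by rewrite ltr_pdivrMr // mul1r; lra.
  lra.
exists (Num.sqrt (a + `|M| / (1/2 - k * s2 / D))).
move=> u [_ hL hP] hK.
have hG0 s : 0 <= Gprim g s.
  have [h1 h2] := hG s.
  have : 0 <= (beta - alpha) * Gprim g s by lra.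
  by rewrite pmulr_rge0 // subr_gt0.
have hGt0 s : 0 <= Gtilde g s.
  have [h1 h2] := hG s.
  have := mulr_ge0 (ltW al2) (hG0 s).
  rewrite /Gtilde; lra.
have hGk s : Gprim g s <= k * Gtilde g s.
  have [h1 h2] := hG s.
  have -> : k * Gtilde g s = (2 * Gtilde g s) / (alpha - 2).
    by rewrite /k; field; rewrite gt_eqF.
  rewrite ler_pdivlMr // /Gtilde; lra.
set X := intRd (fun x => (Gprim g (u x))%:E).
set Y := intRd (fun x => (Gtilde g (u x))%:E).
set A := fine (gagliardo_sq s1 u).
set B := fine (gagliardo_sq s2 u).
have hI : Ifun s1 s2 g u = A / 2 + B / 2 - fine X by [].
have hP' : s1 * A + s2 * B - D * fine Y = 0 by exact: hP.
have hH : Hnorm s1 s2 u = Num.sqrt (A + B + a) by rewrite /Hnorm -hL.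
have gag0 s : (0 <= gagliardo_sq s u)%E.
  apply: intRd_ge0 => x; apply: intRd_ge0 => y.
  by rewrite lee_fin divr_ge0 ?sqr_ge0 ?powR_ge0.
have A0 : 0 <= A by apply: fine_ge0.
have B0 : 0 <= B by apply: fine_ge0.
have hXY : (X <= k%:E * Y)%E.
  by apply: intRd_le => // x; rewrite lee_fin.
have X0 : (0 <= X)%E by apply: intRd_ge0 => x; rewrite lee_fin.
have Y0 : (0 <= Y)%E by apply: intRd_ge0 => x; rewrite lee_fin.
have hpos : 0 < A + B + a by lra.
rewrite hH ltr_sqrt // in hK.
have hc : 0 <= `|M| / (1/2 - k * s2 / D) by apply: divr_ge0; [exact: normr_ge0 | exact: ltW].
rewrite hI; clear hI hP hH.
move: hXY X0 Y0 hP'; case: Y => [y| |] //=; last first.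
  move=> _ _ _; rewrite mulr0 subr0 => h.
  have : 0 < s1 * (A + B) by rewrite mulr_gt0 //; lra.
  have : s1 * B <= s2 * B by rewrite ler_wpM2r // ltW.
  lra.
case: X => [x| |] //= hxy _ _ hP2.
  rewrite -EFinM lee_fin in hxy.
  apply: (@arith R A B x y D s1 s2 k M a) => //; exact: ltW.
Qed.
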